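(* For $k\ge1$ let $N_{2k,k}$ be the reflexive graph on vertex set $\{1,\dots,2k\}$ in which every pair of distinct vertices is adjacent except the pairs $\{1,2\},\{3,4\},\dots,\{2k-1,2k\}$. The family $\{N_{2k,k}: k=1,2,3,\dots\}$ is an antichain under the standard homomorphic image ordering, and hence also under the strong homomorphic image ordering.
   Context: Graphs here are reflexive (loop at every vertex, symmetric edge relation). A homomorphism maps edges to edges; it is strong if additionally every edge of the target between vertices of the image is the image of an edge. Standard homomorphic image ordering: $A\preceq B$ iff there is a surjective homomorphism $B\to A$; strong: iff there is a surjective strong homomorphism $B\to A$. An antichain is a set of pairwise incomparable elements. *)

(* Defs.v *)
From mathcomp Require Import all_boot.
Set Implicit Arguments. Unset Strict Implicit. Unset Printing Implicit Defensive.

Record rgraph := RGraph {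
  vert : finType;
  adj : rel vert;
  adj_refl : reflexive adj;
  adj_sym : symmetric adj }.

Definition is_hom (G H : rgraph) (f : vert G -> vert H) : Prop :=
  forall x y, adj x y -> adj (f x) (f y).

Definition is_strong_hom (G H : rgraph) (f : vert G -> vert H) : Prop :=
  is_hom f /\
  forall x y, adj (f x) (f y) ->
    exists x' y', [/\ f x' = f x, f y' = f y & adj x' y'].

Definition surj (A B : Type) (f : A -> B) : Prop := forall b, exists a, f a = b.

Definition hom_image_le (A B : rgraph) : Prop :=
  exists f : vert B -> vert A, surj f /\ is_hom f.
Definition strong_hom_image_le (A B : rgraph) : Prop :=
  exists f : vert B -> vert A, surj f /\ is_strong_hom f.

(* N_{2k,k}: vertices 0..2k-1 (0-indexed version of 1..2k); distinct vertices
   are adjacent unless they form a pair {2i, 2i+1}. *)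
Definition N_adj (k : nat) : rel 'I_(2 * k) :=
  fun x y => (x == y) || ((val x)./2 != (val y)./2).

Arguments N_adj : clear implicits.

Lemma N_adj_refl (k : nat) : reflexive (N_adj k).
Proof. by move=> x; rewrite /N_adj eqxx. Qed.

Lemma N_adj_sym (k : nat) : symmetric (N_adj k).
Proof. by move=> x y; rewrite /N_adj eq_sym [_./2 == _]eq_sym. Qed.

Definition N (k : nat) : rgraph := @RGraph _ (N_adj k) (@N_adj_refl k) (@N_adj_sym k).

Definition antichain (le : rgraph -> rgraph -> Prop) (F : nat -> rgraph)
  (I : nat -> Prop) : Prop :=
  forall k l, I k -> I l -> k <> l -> ~ le (F k) (F l).

(* Main.v *)
Require Import Defs.
From mathcomp Require Import all_boot.
From mathcomp Require Import zify.

Lemma half_odd_eq (a b : nat) : a./2 = b./2 -> odd a = odd b -> a = b.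
Proof. by move=> h1 h2; rewrite -(odd_double_half a) -(odd_double_half b) h1 h2. Qed.

Lemma halfP1 n : odd n -> n.-1./2 = n./2.
Proof. move=> o; rewrite -!divn2; have := odd_double_half n; rewrite o -muln2 /=; lia. Qed.

Lemma halfS0 n : ~~ odd n -> n.+1./2 = n./2.
Proof. move=> o; rewrite -!divn2; have := odd_double_half n; rewrite (negbTE o) -muln2 /=; lia. Qed.

Lemma no_surj_hom (k l : nat) (f : 'I_(2 * l) -> 'I_(2 * k)) :
  surj f -> (forall x y, N_adj l x y -> N_adj k (f x) (f y)) -> k = l.
Proof.
move=> hs hh.
have finj : injective f.
  move=> x y exy.
  set a := f x.
  have hb : (if odd a then a.-1 else a.+1) < 2 * k.
    have := ltn_ord a; case: ifP => ho; first by lia.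
    move=> ha; rewrite -(odd_double_half a) ho /= in ha *.
    rewrite -muln2 mulnC in ha *; lia.
  have [z hz] := hs (Ordinal hb).
  have hab : ~~ N_adj k a (Ordinal hb).
    rewrite /N_adj negb_or negbK; apply/andP; split.
      apply/negP => /eqP /(congr1 val) /=; case: ifP => ho; last by lia.
      have : 0 < val a by rewrite lt0n; apply: contraTneq ho => /= ->.
      lia.
    apply/negP => /eqP /=; case: ifP => ho.
      by rewrite halfP1 // eqxx.
    by rewrite halfS0 ?ho // eqxx.
  have nx : ~~ N_adj l x z by apply: contra hab => /hh; rewrite hz.
  have ny : ~~ N_adj l y z by apply: contra hab => /hh; rewrite hz -exy.
  move: nx ny; rewrite /N_adj !negb_or !negbK => /andP [nxz /eqP hx] /andP [nyz /eqP hy].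
  apply: val_inj; apply: half_odd_eq; first by rewrite hx hy.
  have dx : odd x != odd z by apply: contra nxz => /eqP o; apply/eqP/val_inj/half_odd_eq.
  have dy : odd y != odd z by apply: contra nyz => /eqP o; apply/eqP/val_inj/half_odd_eq.
  by move: dx dy; case: (odd x); case: (odd y); case: (odd z).
have h1 := leq_card f finj; rewrite !card_ord in h1.
have h2 : #|'I_(2 * k)| <= #|codom f|.
  apply/subset_leq_card/subsetP => b _; have [a <-] := hs b; exact: codom_f.
rewrite card_codom // !card_ord in h2.
lia.
Qed.

Theorem proposition3p3 :
  antichain hom_image_le N (fun k => 1 <= k) /\
  antichain strong_hom_image_le N (fun k => 1 <= k).
Proof.
split=> k l _ _ nkl [f [hs hh]].
  by apply: nkl; exact: (@no_surj_hom k l f hs hh).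
by apply: nkl; exact: (@no_surj_hom k l f hs hh.1).
Qed.
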